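(* $C(\partial\mathcal{T})_0 = \left\{ f \in C(\partial\mathcal{T}): \sup_{(v,v')\in \mathcal H} \frac{|f(\tau(v)) - f(\tau(v'))|}{\delta(v,v')} < \infty \right\}$ is a dense subalgebra of $C(\partial\mathcal{T})$.
   Context: Let $\mathcal{T}=(\mathcal{T}^{(0)},\mathcal{T}^{(1)})$ be a rooted tree (edges oriented away from the root) in which every vertex has finitely many outgoing edges, so each level $\mathcal{T}^{(0)}_n$ (vertices at combinatorial distance $n$ from the root) is finite. Write $v\preceq v'$ if there is a (possibly empty) path from $v$ to $v'$, and for vertices $v,v'$ let $v\wedge v'$ denote their greatest common ancestor and $|v\wedge v'|$ its level. The boundary $\partial\mathcal{T}$ is the set of infinite paths starting at the root, with the topology whose basis consists of the clopen sets $[v]$ = infinite paths passing through $v$; it is a compact totally disconnected metrizable space. Let $\mathcal H\subset\{(v,v')\in\mathcal{T}^{(0)}\times\mathcal{T}^{(0)}: v\not\preceq v', v'\not\preceq v\}$ be a non-empty symmetric set of ''horizontal edges'', locally finite. Let $\delta:\mathcal H\to\mathbb{R}^{>0}$ be a symmetric length function such that for every $\epsilon>0$ only finitely many $h\in\mathcal H$ have $\delta(h)>\epsilon$, and such that there is a strictly decreasing sequence $(\delta_n)_n$ tending to $0$ with $\delta(v,v')\ge\delta_{|v\wedge v'|}$. Let $\tau:\mathcal{T}^{(0)}\to\partial\mathcal{T}$ be a choice function: $\tau(v)$ passes through $v$, and if $w\prec v$ then $\tau(w)=\tau(v)$ iff $\tau(w)$ passes through $v$. *)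

(* Defs.v *)
From Stdlib Require Import Reals List Lia.
From Coquelicot Require Import Coquelicot.
Open Scope R_scope.

(* A locally finite rooted tree is encoded (up to isomorphism) by a
   branching function b : list nat -> nat : the vertices are the words
   w = [i_0; ...; i_{n-1}] with i_k < b (first k letters of w); the root is
   the empty word, the children of w are the words w ++ [i] with i < b w,
   and the level of w is its length. *)
Definition valid (b : list nat -> nat) (w : list nat) : Prop :=
  forall k, (k < length w)%nat -> (nth k w 0 < b (firstn k w))%nat.

Definition vertex (b : list nat -> nat) := {w : list nat | valid b w}.

Definition word {b} (v : vertex b) : list nat := proj1_sig v.

Definition prefix (x : nat -> nat) (n : nat) : list nat := map x (seq 0 n).

Definition boundary (b : list nat -> nat) :=
  {x : nat -> nat | forall n, (x n < b (prefix x n))%nat}.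

Definition path {b} (x : boundary b) : nat -> nat := proj1_sig x.

Definition passes {b} (x : boundary b) (v : vertex b) : Prop :=
  prefix (path x) (length (word v)) = word v.

Definition preceq {b} (v v' : vertex b) : Prop :=
  exists u, word v ++ u = word v'.

Definition prec {b} (v v' : vertex b) : Prop := preceq v v' /\ v <> v'.

Fixpoint lcp_len (u w : list nat) : nat :=
  match u, w with
  | a :: u', c :: w' => if Nat.eqb a c then S (lcp_len u' w') else 0%nat
  | _, _ => 0%nat
  end.

Definition meet_level {b} (v v' : vertex b) : nat := lcp_len (word v) (word v').

(* Continuity on the boundary for the topology with basis the cylinders [v]:
   the neighbourhoods of x are the cylinders [prefix x n]. *)
Definition continuous_bd {b} (f : boundary b -> C) : Prop :=
  forall (x : boundary b) (eps : R), 0 < eps ->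
    exists n : nat, forall y : boundary b,
      (forall k, (k < n)%nat -> path y k = path x k) ->
      Cmod (Cminus (f y) (f x)) < eps.

Definition C0 {b} (H : vertex b -> vertex b -> Prop)
  (delta : vertex b -> vertex b -> R) (tau : vertex b -> boundary b)
  (f : boundary b -> C) : Prop :=
  continuous_bd f /\
  exists M : R, forall v v', H v v' ->
    Cmod (Cminus (f (tau v)) (f (tau v'))) / delta v v' <= M.

Definition subalgebra {b} (A : (boundary b -> C) -> Prop) : Prop :=
  (forall f, A f -> continuous_bd f) /\
  A (fun _ => RtoC 1) /\
  (forall f g, A f -> A g -> A (fun x => Cplus (f x) (g x))) /\
  (forall f g, A f -> A g -> A (fun x => Cmult (f x) (g x))) /\
  (forall (c : C) f, A f -> A (fun x => Cmult c (f x))).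

Definition dense_sup {b} (A : (boundary b -> C) -> Prop) : Prop :=
  forall f : boundary b -> C, continuous_bd f ->
    forall eps : R, 0 < eps ->
      exists g, A g /\ forall x, Cmod (Cminus (f x) (g x)) <= eps.

(* Main.v *)
Require Import Defs.
From Stdlib Require Import Reals List.
From Coquelicot Require Import Coquelicot.
From Stdlib Require Import Arith Classical ClassicalEpsilon ProofIrrelevance Lra Lia Psatz.
Open Scope R_scope.

Lemma prefix_len (x : nat -> nat) n : length (prefix x n) = n.
Proof. unfold prefix. rewrite length_map, length_seq. reflexivity. Qed.

Lemma prefix_S (x : nat -> nat) n : prefix x (S n) = prefix x n ++ x n :: nil.
Proof. unfold prefix. rewrite seq_S, map_app. reflexivity. Qed.

Lemma prefix_nth (x : nat -> nat) n k : (k < n)%nat -> nth k (prefix x n) 0%nat = x k.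
Proof.
  intros Hk. unfold prefix.
  rewrite nth_indep with (d' := x 0%nat) by (rewrite length_map, length_seq; lia).
  rewrite map_nth, seq_nth by lia. reflexivity.
Qed.

Lemma firstn_prefix (x : nat -> nat) m n : (m <= n)%nat -> firstn m (prefix x n) = prefix x m.
Proof.
  intros Hm. replace n with (m + (n - m))%nat by lia.
  unfold prefix. rewrite seq_app, map_app, firstn_app.
  rewrite firstn_all2 by (rewrite length_map, length_seq; lia).
  rewrite length_map, length_seq. replace (m - m)%nat with 0%nat by lia.
  simpl. rewrite app_nil_r. reflexivity.
Qed.

Lemma prefix_agree (x y : nat -> nat) n :
  prefix y n = prefix x n <-> (forall k, (k < n)%nat -> y k = x k).
Proof.
  split.
  - intros He k Hk. rewrite <- (prefix_nth y n k Hk), <- (prefix_nth x n k Hk), He. reflexivity.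
  - intros Ha. unfold prefix. apply map_ext_in. intros a Ha'. apply in_seq in Ha'. apply Ha. lia.
Qed.

Lemma prefix_mono (x y : nat -> nat) m n : (m <= n)%nat ->
  prefix y n = prefix x n -> prefix y m = prefix x m.
Proof.
  intros Hm He. rewrite <- (firstn_prefix y m n Hm), <- (firstn_prefix x m n Hm), He. reflexivity.
Qed.

Lemma valid_prefix b (x : boundary b) n : valid b (prefix (path x) n).
Proof.
  intros k Hk. rewrite prefix_len in Hk.
  rewrite prefix_nth by lia. rewrite firstn_prefix by lia.
  apply (proj2_sig x).
Qed.

Lemma fan b (P : list nat -> Prop) :
  (forall x : boundary b, exists n, P (prefix (path x) n)) ->
  (forall w, (forall i, (i < b w)%nat -> P (w ++ i :: nil)) -> P w) -> P nil.
Proof.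
  intros H1 H2. apply NNPP. intros Hnil.
  assert (step : forall w, ~ P w -> {i : nat | (i < b w)%nat /\ ~ P (w ++ i :: nil)}).
  { intros w Hw. apply constructive_indefinite_description.
    apply NNPP. intros Hn. apply Hw, H2. intros i Hi. apply NNPP. intros Hp.
    apply Hn. exists i. auto. }
  set (build := fix build (n : nat) : {w : list nat | ~ P w} :=
    match n with
    | O => exist _ nil Hnil
    | S n => let p := build n in
        exist (fun w => ~ P w) (proj1_sig p ++ proj1_sig (step _ (proj2_sig p)) :: nil)
              (proj2 (proj2_sig (step _ (proj2_sig p))))
    end).
  set (x := fun n => proj1_sig (step _ (proj2_sig (build n)))).
  assert (Hpx : forall n, prefix x n = proj1_sig (build n)).
  { induction n. reflexivity. rewrite prefix_S, IHn. reflexivity. }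
  assert (Hb : forall n, (x n < b (prefix x n))%nat).
  { intros n. rewrite Hpx. unfold x. exact (proj1 (proj2_sig (step _ (proj2_sig (build n))))). }
  destruct (H1 (exist _ x Hb)) as [n Hn]. simpl in Hn.
  rewrite Hpx in Hn. exact (proj2_sig (build n) Hn).
Qed.

Lemma finmaxR (k : nat) (Q : nat -> R -> Prop) :
  (forall i M M', Q i M -> M <= M' -> Q i M') ->
  (forall i, (i < k)%nat -> exists M, Q i M) -> exists M, forall i, (i < k)%nat -> Q i M.
Proof.
  intros Hm. induction k; intros Hk.
  - exists 0. intros; lia.
  - destruct IHk as [M HM]. { intros; apply Hk; lia. }
    destruct (Hk k) as [M' HM']. lia.
    exists (Rmax M M'). intros i Hi.
    destruct (Nat.eq_dec i k). subst. apply (Hm _ M'); auto. apply Rmax_r.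
    apply (Hm _ M). apply HM. lia. apply Rmax_l.
Qed.

Lemma finmaxN (k : nat) (Q : nat -> nat -> Prop) :
  (forall i M M', Q i M -> (M <= M')%nat -> Q i M') ->
  (forall i, (i < k)%nat -> exists M, Q i M) -> exists M, forall i, (i < k)%nat -> Q i M.
Proof.
  intros Hm. induction k; intros Hk.
  - exists 0%nat. intros; lia.
  - destruct IHk as [M HM]. { intros; apply Hk; lia. }
    destruct (Hk k) as [M' HM']. lia.
    exists (Nat.max M M'). intros i Hi.
    destruct (Nat.eq_dec i k). subst. apply (Hm _ M'); auto; lia.
    apply (Hm _ M). apply HM. lia. lia.
Qed.

Lemma Cmod_sub_tri (a c d : C) : Cmod (Cminus a c) <= Cmod (Cminus a d) + Cmod (Cminus c d).
Proof.
  replace (Cminus a c) with (Cplus (Cminus a d) (Copp (Cminus c d))) by ring.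
  eapply Rle_trans. apply Cmod_triangle. rewrite Cmod_opp. lra.
Qed.

Lemma Cmod_le_diff (a c : C) : Cmod a <= Cmod (Cminus a c) + Cmod c.
Proof.
  replace a with (Cplus (Cminus a c) c) at 1 by ring. apply Cmod_triangle.
Qed.

Lemma Cmod_self (a : C) : Cmod (Cminus a a) = 0.
Proof. replace (Cminus a a) with (RtoC 0) by ring. apply Cmod_0. Qed.

Lemma through_child b (y : boundary b) (w : list nat) :
  prefix (path y) (length w) = w ->
  (path y (length w) < b w)%nat /\
  prefix (path y) (length (w ++ path y (length w) :: nil)) = w ++ path y (length w) :: nil.
Proof.
  intros Hw. split.
  - rewrite <- Hw at 2. apply (proj2_sig y).
  - rewrite length_app. simpl. rewrite Nat.add_1_r, prefix_S, Hw. reflexivity.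
Qed.

Lemma bounded b (f : boundary b -> C) : continuous_bd f ->
  exists M, 0 <= M /\ forall x, Cmod (f x) <= M.
Proof.
  intros Hf.
  assert (Hnil : (fun w => exists M, forall y : boundary b,
            prefix (path y) (length w) = w -> Cmod (f y) <= M) nil).
  { apply (fan b).
    - intros x. destruct (Hf x 1 Rlt_0_1) as [n Hn]. exists n.
      exists (Cmod (f x) + 1). intros y Hy. rewrite prefix_len in Hy.
      pose proof (proj1 (prefix_agree _ _ _) Hy) as T; clear Hy; rename T into Hy. specialize (Hn y Hy).
      pose proof (Cmod_le_diff (f y) (f x)). lra.
    - intros w Hw. destruct (finmaxR (b w) (fun i M => forall y : boundary b,
            prefix (path y) (length (w ++ i :: nil)) = w ++ i :: nil -> Cmod (f y) <= M))
        as [M HM].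
      + intros i M M' HQ HMM y Hy. specialize (HQ y Hy). lra.
      + exact Hw.
      + exists M. intros y Hy. destruct (through_child b y w Hy) as [Hi Hc].
        exact (HM _ Hi y Hc). }
  destruct Hnil as [M HM]. exists (Rmax M 0). split. apply Rmax_r.
  intros x. eapply Rle_trans. apply HM. reflexivity. apply Rmax_l.
Qed.

Lemma unif_cont b (f : boundary b -> C) : continuous_bd f -> forall eps, 0 < eps ->
  exists N, forall y z : boundary b, prefix (path y) N = prefix (path z) N ->
    Cmod (Cminus (f y) (f z)) < eps.
Proof.
  intros Hf eps He.
  assert (Hnil : (fun w => exists N, forall y z : boundary b,
            prefix (path y) (length w) = w -> prefix (path z) (length w) = w ->
            prefix (path y) N = prefix (path z) N ->
            Cmod (Cminus (f y) (f z)) < eps) nil).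
  { apply (fan b).
    - intros x. destruct (Hf x (eps/2)) as [n Hn]. lra. exists n. exists n.
      intros y z Hy Hz _. rewrite prefix_len in Hy, Hz.
      pose proof (proj1 (prefix_agree _ _ _) Hy) as T; clear Hy; rename T into Hy. pose proof (proj1 (prefix_agree _ _ _) Hz) as T; clear Hz; rename T into Hz.
      pose proof (Hn y Hy). pose proof (Hn z Hz).
      pose proof (Cmod_sub_tri (f y) (f z) (f x)). lra.
    - intros w Hw. destruct (finmaxN (b w) (fun i N => forall y z : boundary b,
            prefix (path y) (length (w ++ i :: nil)) = w ++ i :: nil ->
            prefix (path z) (length (w ++ i :: nil)) = w ++ i :: nil ->
            prefix (path y) N = prefix (path z) N ->
            Cmod (Cminus (f y) (f z)) < eps)) as [N HN].
      + intros i M M' HQ HMM y z Hy Hz Hyz. apply HQ; auto.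
        apply (prefix_mono _ _ M M'); auto.
      + exact Hw.
      + exists (Nat.max N (S (length w))). intros y z Hy Hz Hyz.
        destruct (through_child b y w Hy) as [Hi Hc].
        destruct (through_child b z w Hz) as [Hi' Hc'].
        assert (Heq : path y (length w) = path z (length w)).
        { apply (proj1 (prefix_agree (path z) (path y) (S (length w)))).
          apply (prefix_mono _ _ _ (Nat.max N (S (length w)))). lia. exact Hyz. lia. }
        rewrite <- Heq in Hc'.
        apply (HN _ Hi y z Hc Hc'). apply (prefix_mono _ _ _ (Nat.max N (S (length w)))). lia. exact Hyz. }
  destruct Hnil as [N HN]. exists N. intros y z Hyz. apply HN; auto.
Qed.
Lemma lcp_firstn (u w : list nat) N : (N <= lcp_len u w)%nat ->
  firstn N u = firstn N w /\ (N <= length u)%nat /\ (N <= length w)%nat.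
Proof.
  revert w N. induction u as [|a u IH]; intros w N HN.
  - simpl in HN. replace N with 0%nat by lia. simpl. split; auto; lia.
  - destruct w as [|c w]. simpl in HN. replace N with 0%nat by lia. simpl; split; auto; lia.
    simpl in HN. destruct (Nat.eqb_spec a c).
    + subst. destruct N. simpl; split; auto; lia.
      destruct (IH w N) as [H1 [H2 H3]]. lia. simpl. rewrite H1. split; auto; lia.
    + replace N with 0%nat by lia. simpl; split; auto; lia.
Qed.

Lemma dec_anti (dn : nat -> R) : (forall n, dn (S n) < dn n) ->
  forall m n, (m <= n)%nat -> dn n <= dn m.
Proof.
  intros Hd m n Hmn. induction Hmn. lra. specialize (Hd m0). lra.
Qed.

Lemma dec_pos (dn : nat -> R) : (forall n, dn (S n) < dn n) -> is_lim_seq dn 0 ->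
  forall n, 0 < dn n.
Proof.
  intros Hd Hl n. apply Rnot_le_lt. intros Hn.
  apply is_lim_seq_spec in Hl. simpl in Hl.
  assert (Hp : 0 < - dn (S n)) by (specialize (Hd n); lra).
  destruct (Hl (mkposreal _ Hp)) as [N HN]. simpl in HN.
  specialize (HN (Nat.max N (S n)) (Nat.le_max_l _ _)).
  pose proof (dec_anti dn Hd (S n) (Nat.max N (S n)) (Nat.le_max_r _ _)).
  specialize (Hd n).
  rewrite Rminus_0_r in HN. rewrite Rabs_left in HN by lra. lra.
Qed.

Lemma ratio_le (a c d e : R) : 0 <= a -> a <= c -> 0 < d -> d <= e -> a / e <= c / d.
Proof.
  intros. unfold Rdiv. apply Rmult_le_compat; auto.
  left; apply Rinv_0_lt_compat; lra. apply Rinv_le_contravar; auto.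
Qed.

Lemma Cmod_prod_diff (a b c d : C) :
  Cmod (Cminus (Cmult a b) (Cmult c d)) <= Cmod a * Cmod (Cminus b d) + Cmod d * Cmod (Cminus a c).
Proof.
  replace (Cminus (Cmult a b) (Cmult c d)) with
    (Cplus (Cmult a (Cminus b d)) (Cmult d (Cminus a c))) by ring.
  eapply Rle_trans. apply Cmod_triangle. rewrite !Cmod_mult. lra.
Qed.

Lemma Cmod_sum_diff (a b c d : C) :
  Cmod (Cminus (Cplus a b) (Cplus c d)) <= Cmod (Cminus a c) + Cmod (Cminus b d).
Proof.
  replace (Cminus (Cplus a b) (Cplus c d)) with (Cplus (Cminus a c) (Cminus b d)) by ring.
  apply Cmod_triangle.
Qed.

Lemma Cmod_scal_diff (c a b : C) :
  Cmod (Cminus (Cmult c a) (Cmult c b)) = Cmod c * Cmod (Cminus a b).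
Proof.
  replace (Cminus (Cmult c a) (Cmult c b)) with (Cmult c (Cminus a b)) by ring.
  apply Cmod_mult.
Qed.

Lemma div_bound (t M d : R) : 0 < d -> t / d <= M -> t <= M * d.
Proof.
  intros Hd H. unfold Rdiv in H.
  apply (Rmult_le_compat_r d) in H; [|lra].
  rewrite Rmult_assoc, Rinv_l in H by lra. lra.
Qed.

Lemma bound_div (t M d : R) : 0 < d -> t <= M * d -> t / d <= M.
Proof.
  intros Hd H. unfold Rdiv.
  apply (Rmult_le_compat_r (/ d)) in H; [|left; apply Rinv_0_lt_compat; lra].
  rewrite Rmult_assoc, Rinv_r in H by lra. lra.
Qed.

Theorem lemma2p2 (b : list nat -> nat)
  (H : vertex b -> vertex b -> Prop)
  (delta : vertex b -> vertex b -> R)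
  (tau : vertex b -> boundary b)
  (H_sym : forall v v', H v v' -> H v' v)
  (H_horiz : forall v v', H v v' -> ~ preceq v v' /\ ~ preceq v' v)
  (H_nonempty : exists v v', H v v')
  (H_locfin : forall v, exists l : list (vertex b), forall v', H v v' -> In v' l)
  (delta_pos : forall v v', H v v' -> 0 < delta v v')
  (delta_sym : forall v v', H v v' -> delta v v' = delta v' v)
  (delta_fin : forall eps, 0 < eps ->
     exists l : list (vertex b * vertex b),
       forall v v', H v v' -> eps < delta v v' -> In (v, v') l)
  (delta_seq : exists dn : nat -> R,
     (forall n, dn (S n) < dn n) /\ is_lim_seq dn 0 /\
     forall v v', H v v' -> dn (meet_level v v') <= delta v v')
  (tau_passes : forall v, passes (tau v) v)
  (tau_choice : forall w v, prec w v -> (tau w = tau v <-> passes (tau w) v)) :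
  subalgebra (C0 H delta tau) /\ dense_sup (C0 H delta tau).
Proof.
  split.
  - split; [|split; [|split; [|split]]].
    + intros f [Hf _]. exact Hf.
    + split.
      * intros x eps He. exists 0%nat. intros y _. rewrite Cmod_self. exact He.
      * exists 0. intros v v' Hv. rewrite Cmod_self. unfold Rdiv. lra.
    + intros f g [Hf [Mf HMf]] [Hg [Mg HMg]]. split.
      * intros x eps He. destruct (Hf x (eps/2)) as [n1 Hn1]. lra.
        destruct (Hg x (eps/2)) as [n2 Hn2]. lra.
        exists (Nat.max n1 n2). intros y Hy.
        assert (A1 := Hn1 y (fun k Hk => Hy k (ltac:(lia)))).
        assert (A2 := Hn2 y (fun k Hk => Hy k (ltac:(lia)))).
        pose proof (Cmod_sum_diff (f y) (g y) (f x) (g x)). lra.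
      * exists (Mf + Mg). intros v v' Hv. pose proof (delta_pos v v' Hv) as Hd.
        apply bound_div; auto.
        pose proof (div_bound _ _ _ Hd (HMf v v' Hv)).
        pose proof (div_bound _ _ _ Hd (HMg v v' Hv)).
        pose proof (Cmod_sum_diff (f (tau v)) (g (tau v)) (f (tau v')) (g (tau v'))). lra.
    + intros f g [Hf [Mf HMf]] [Hg [Mg HMg]].
      destruct (bounded b f Hf) as [Bf [Bf0 HBf]].
      destruct (bounded b g Hg) as [Bg [Bg0 HBg]]. split.
      * intros x eps He. set (e := eps / (Bf + Bg + 1)).
        assert (He' : 0 < e) by (unfold e; apply Rdiv_lt_0_compat; lra).
        assert (Hee : e * (Bf + Bg + 1) = eps) by (unfold e; field; lra).
        destruct (Hf x e He') as [n1 Hn1]. destruct (Hg x e He') as [n2 Hn2].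
        exists (Nat.max n1 n2). intros y Hy.
        assert (A1 := Hn1 y (fun k Hk => Hy k (ltac:(lia)))).
        assert (A2 := Hn2 y (fun k Hk => Hy k (ltac:(lia)))).
        pose proof (Cmod_prod_diff (f y) (g y) (f x) (g x)).
        pose proof (HBf y). pose proof (HBg x).
        pose proof (Cmod_ge_0 (f y)). pose proof (Cmod_ge_0 (g x)).
        pose proof (Cmod_ge_0 (Cminus (f y) (f x))). pose proof (Cmod_ge_0 (Cminus (g y) (g x))).
        nra.
      * exists (Bf * Mg + Bg * Mf). intros v v' Hv. pose proof (delta_pos v v' Hv) as Hd.
        apply bound_div; auto.
        pose proof (div_bound _ _ _ Hd (HMf v v' Hv)).
        pose proof (div_bound _ _ _ Hd (HMg v v' Hv)).
        pose proof (Cmod_prod_diff (f (tau v)) (g (tau v)) (f (tau v')) (g (tau v'))).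
        pose proof (HBf (tau v)). pose proof (HBg (tau v')).
        pose proof (Cmod_ge_0 (f (tau v))). pose proof (Cmod_ge_0 (g (tau v'))).
        pose proof (Cmod_ge_0 (Cminus (f (tau v)) (f (tau v')))).
        pose proof (Cmod_ge_0 (Cminus (g (tau v)) (g (tau v')))).
        nra.
    + intros c f [Hf [Mf HMf]]. split.
      * intros x eps He. set (e := eps / (Cmod c + 1)).
        pose proof (Cmod_ge_0 c).
        assert (He' : 0 < e) by (unfold e; apply Rdiv_lt_0_compat; lra).
        assert (Hee : e * (Cmod c + 1) = eps) by (unfold e; field; lra).
        destruct (Hf x e He') as [n1 Hn1]. exists n1. intros y Hy.
        specialize (Hn1 y Hy). rewrite Cmod_scal_diff.
        pose proof (Cmod_ge_0 (Cminus (f y) (f x))). nra.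
      * exists (Cmod c * Mf). intros v v' Hv. pose proof (delta_pos v v' Hv) as Hd.
        apply bound_div; auto. rewrite Cmod_scal_diff.
        pose proof (div_bound _ _ _ Hd (HMf v v' Hv)). pose proof (Cmod_ge_0 c). nra.
  - intros f Hf eps He.
    destruct (bounded b f Hf) as [B [B0 HB]].
    destruct (unif_cont b f Hf eps He) as [N HN].
    destruct delta_seq as [dn [Hdec [Hlim Hdn]]].
    pose proof (dec_pos dn Hdec Hlim N) as HdN.
    set (vtx := fun x : boundary b => exist (valid b) (prefix (path x) N) (valid_prefix b x N)
               : vertex b).
    assert (Hvtx : forall x y : boundary b, prefix (path y) N = prefix (path x) N -> vtx y = vtx x).
    { intros x y Hxy. unfold vtx. generalize (valid_prefix b y N) (valid_prefix b x N).
      rewrite Hxy. intros p q. f_equal. apply proof_irrelevance. }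
    exists (fun x => f (tau (vtx x))). split; [split|].
    + intros x e' He'. exists N. intros y Hy.
      rewrite (Hvtx x y (proj2 (prefix_agree _ _ _) Hy)). rewrite Cmod_self. exact He'.
    + exists (2 * B / dn N). intros v v' Hv. pose proof (delta_pos v v' Hv) as Hd.
      destruct (le_lt_dec N (meet_level v v')) as [Hle|Hlt].
      * unfold meet_level in Hle. destruct (lcp_firstn _ _ _ Hle) as [E1 [L1 L2]].
        assert (P1 := tau_passes v). assert (P2 := tau_passes v').
        unfold passes in P1, P2.
        assert (prefix (path (tau v)) N = prefix (path (tau v')) N).
        { rewrite <- (firstn_prefix _ N _ L1), <- (firstn_prefix _ N _ L2), P1, P2. exact E1. }
        rewrite (Hvtx (tau v') (tau v)) by auto. rewrite Cmod_self. unfold Rdiv.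
        rewrite Rmult_0_l. apply Rmult_le_pos. lra. left. apply Rinv_0_lt_compat. lra.
      * apply ratio_le. apply Cmod_ge_0.
        -- eapply Rle_trans. apply Cmod_sub_tri with (d := RtoC 0).
           replace (Cminus (f (tau (vtx (tau v)))) (RtoC 0)) with (f (tau (vtx (tau v)))) by ring.
           replace (Cminus (f (tau (vtx (tau v')))) (RtoC 0)) with (f (tau (vtx (tau v')))) by ring.
           pose proof (HB (tau (vtx (tau v)))). pose proof (HB (tau (vtx (tau v')))). lra.
        -- exact HdN.
        -- eapply Rle_trans. apply (dec_anti dn Hdec (meet_level v v') N). lia. apply Hdn; auto.
    + intros x. left. apply HN.
      pose proof (tau_passes (vtx x)) as P. unfold passes in P. simpl in P.
      rewrite prefix_len in P. rewrite P. reflexivity.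
Qed.
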